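(* Let $\mathcal X,\mathcal Y$ be nonempty convex compact sets and $\mathcal L:\mathcal X\times\mathcal Y\to\mathbb R$ a differentiable, uniformly strongly convex-concave function with saddle point $(x^*,y^* )$ and finite curvature constant $C_{\mathcal L}$ and finite $M_{\mathcal L}$. Let $z^{(t)}$ be a current iterate and, for a direction $d^{(t)}$ and step $\gamma$, let $w_\gamma:=w(z^{(t)}+\gamma d^{(t)})$ and $w_t:=w(z^{(t)})$. (I) If $(x^*,y^* )$ lies in the relative interior of $\mathcal X\times\mathcal Y$, $\mu^{int}_{\mathcal L}>0$, and $d^{(t)}=d^{(t)}_{FW}$ is the FW direction, then for any $\gamma\in[0,1]$, $$w_\gamma\le w_t-\nu^{FW}\gamma g_t^{FW}+\gamma^2C_{\mathcal L},\qquad\nu^{FW}:=1-\frac{M_{\mathcal L}}{\sqrt{\mu^{int}_{\mathcal L}}}.$$ (P) If $\mathcal X=\mathrm{conv}(\mathcal A)$, $\mathcal Y=\mathrm{conv}(\mathcal B)$ with $\mathcal A,\mathcal B$ finite, $\mu^A_{\mathcal L}>0$, and $d^{(t)}$ is the direction chosen by a step of SP-AFW at $z^{(t)}$, then for any $\gamma\in[0,\gamma_{\max}]$, $$w_\gamma\le w_t-\nu^{PFW}\gamma g_t^{PFW}+\gamma^2C_{\mathcal L},\qquad\nu^{PFW}:=\frac12-\frac{M_{\mathcal L}}{\sqrt{\mu^A_{\mathcal L}}}.$$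
   Context: Convex-concave: $\mathcal L(\cdot,y)$ convex, $\mathcal L(x,\cdot)$ concave. Uniformly strongly convex-concave: there are $\mu_{\mathcal X},\mu_{\mathcal Y}>0$ with $\mathcal L(\cdot,y)$ $\mu_{\mathcal X}$-strongly convex for every $y$ and $-\mathcal L(x,\cdot)$ $\mu_{\mathcal Y}$-strongly convex for every $x$. Saddle point: $\mathcal L(x^*,y)\le\mathcal L(x^*,y^* )\le\mathcal L(x,y^* )$ for all $x,y$; $\mathcal L^*:=\mathcal L(x^*,y^* )$. For $z=(x,y)$: $r(z):=(\nabla_x\mathcal L(z),-\nabla_y\mathcal L(z))$, $w(z):=\mathcal L(x,y^* )-\mathcal L(x^*,y)$. With $r^{(t)}:=r(z^{(t)})$, $s^{(t)}\in\arg\min_{s\in\mathcal X\times\mathcal Y}\langle s,r^{(t)}\rangle$, $d^{(t)}_{FW}:=s^{(t)}-z^{(t)}$, $g_t^{FW}:=\langle-r^{(t)},d_{FW}^{(t)}\rangle$. SP-AFW step at $z^{(t)}$: $z^{(t)}$ is given with active sets $S_x^{(t)}\subseteq\mathcal A$, $S_y^{(t)}\subseteq\mathcal B$ and positive weights $\alpha$ summing to one on each, $x^{(t)}=\sum_{v\in S_x^{(t)}}\alpha_vv$, $y^{(t)}=\sum_{v\in S_y^{(t)}}\alpha_vv$. Let $v^{(t)}=(v_x^{(t)},v_y^{(t)})\in\arg\max_{v\in S_x^{(t)}\times S_y^{(t)}}\langle r^{(t)},v\rangle$, $d^{(t)}_A:=z^{(t)}-v^{(t)}$; if $\langle-r^{(t)},d^{(t)}_{FW}\rangle\ge\langle-r^{(t)},d^{(t)}_A\rangle$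 then $d^{(t)}:=d^{(t)}_{FW}$, $\gamma_{\max}:=1$; else $d^{(t)}:=d^{(t)}_A$, $\gamma_{\max}:=\min\{\frac{\alpha_{v_x^{(t)}}}{1-\alpha_{v_x^{(t)}}},\frac{\alpha_{v_y^{(t)}}}{1-\alpha_{v_y^{(t)}}}\}$. $g_t^{PFW}:=\langle-r^{(t)},d^{(t)}_{FW}+d^{(t)}_A\rangle$. Constants. $\mathcal F:=\{\mathcal L(\cdot,y):y\in\mathcal Y\}$, $\mathcal G:=\{-\mathcal L(x,\cdot):x\in\mathcal X\}$. Curvature: $C_f:=\sup\frac2{\gamma^2}(f(x+\gamma(s-v))-f(x)-\gamma\langle s-v,\nabla f(x)\rangle)$ over $x,s,v$ in the domain, $\gamma>0$ with $x+\gamma(s-v)$ in the domain; $C_{\mathcal L}:=\frac12(\sup_{f\in\mathcal F}C_f+\sup_{g\in\mathcal G}C_g)$. Interior strong convexity of $f$ on $\mathcal K$ w.r.t. $x_c$ in its relative interior: $\mu_f^{x_c}:=\inf\frac2{\gamma^2}(f(u)-f(x)-\langle u-x,\nabla f(x)\rangle)$ over $x\in\mathcal K\setminus\{x_c\}$, $\gamma\in(0,1]$, $u=x+\gamma(s-x)$ where $s$ is where the ray from $x$ through $x_c$ meets the relative boundary of $\mathcal K$; $\mu^{int}_{\mathcal L}:=\min\{\inf_{f\in\mathcal F}\mu_f^{x^*},\inf_{g\in\mathcal G}\mu_g^{y^*}\}$. Geometric strong convexity of $f$ on $\mathcal K=\mathrm{conv}(\mathcal A)$: for $x\in\mathcal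 K$, $\mathcal S_x$ = family of $S\subseteq\mathcal A$ such that $x$ is a convex combination of all elements of $S$ with positive coefficients, $v_S(x)\in\arg\max_{v\in S}\langle\nabla f(x),v\rangle$, $v_f(x)\in\arg\min\{\langle\nabla f(x),v\rangle:v=v_S(x),S\in\mathcal S_x\}$, $s_f(x)\in\arg\min_{v\in\mathcal A}\langle\nabla f(x),v\rangle$, $\gamma^A(x,x'):=\frac{\langle-\nabla f(x),x'-x\rangle}{\langle-\nabla f(x),s_f(x)-v_f(x)\rangle}$, $\mu^A_f:=\inf_{x\in\mathcal K}\inf_{x':\langle\nabla f(x),x'-x\rangle<0}\frac2{\gamma^A(x,x')^2}(f(x')-f(x)-\langle x'-x,\nabla f(x)\rangle)$; $\mu^A_{\mathcal L}:=\min\{\inf_{f\in\mathcal F}\mu^A_f\text{ (over }\mathcal A),\inf_{g\in\mathcal G}\mu^A_g\text{ (over }\mathcal B)\}$. Bilinearity: $M_{XY}:=\sup\langle s-v,\frac{\nabla_x\mathcal L(x,y^* )-\nabla_x\mathcal L(x,y)}{\sqrt{\mathcal L^*-\mathcal L(x^*,y)}}\rangle$ over $y\ne y^*$, $x,s,v\in\mathcal X$; $M_{YX}:=\sup\langle s-v,\frac{\nabla_y\mathcal L(x,y)-\nabla_y\mathcal L(x^*,y)}{\sqrt{\mathcal L(x,y^* )-\mathcal L^*}}\rangle$ over $x\ne x^*$, $y,s,v\in\mathcal Y$; $M_{\mathcal L}:=\max\{M_{XY},M_{YX}\}$. *)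

(* Defs.v *)
From HB Require Import structures.
From mathcomp Require Import all_boot all_order all_algebra.
From mathcomp Require Import all_classical all_reals all_analysis.
Set Implicit Arguments. Unset Strict Implicit. Unset Printing Implicit Defensive.
Import Order.TTheory GRing.Theory Num.Theory.
Import numFieldNormedType.Exports.
Local Open Scope classical_set_scope.
Local Open Scope ring_scope.

Section SPDefs.
Context {R : realType}.

Definition dotv {n : nat} (u v : 'rV[R]_n) : R := \sum_(i < n) u 0 i * v 0 i.

Definition convex_setR {n : nat} (K : set 'rV[R]_n) : Prop :=
  forall x y (t : R), K x -> K y -> 0 <= t <= 1 -> K (t *: x + (1 - t) *: y).

Definition strongly_convex_on {n : nat} (K : set 'rV[R]_n) (mu : R)
  (f : 'rV[R]_n -> R) : Prop :=
  forall x y (t : R), K x -> K y -> 0 <= t <= 1 ->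
    f (t *: x + (1 - t) *: y) <=
      t * f x + (1 - t) * f y - mu / 2 * t * (1 - t) * dotv (x - y) (x - y).

Definition Lpair {n m : nat} (L : 'rV[R]_n -> 'rV[R]_m -> R) :
  'rV[R]_n * 'rV[R]_m -> R := fun p => L p.1 p.2.

Definition gradx {n m : nat} (L : 'rV[R]_n -> 'rV[R]_m -> R) x y : 'rV[R]_n :=
  \row_(i < n) ('d (Lpair L) (x, y) (delta_mx 0 i, 0)).
Definition grady {n m : nat} (L : 'rV[R]_n -> 'rV[R]_m -> R) x y : 'rV[R]_m :=
  \row_(i < m) ('d (Lpair L) (x, y) (0, delta_mx 0 i)).

Definition unif_strongly_convex_concave {n m : nat} (X : set 'rV[R]_n)
  (Y : set 'rV[R]_m) (L : 'rV[R]_n -> 'rV[R]_m -> R) : Prop :=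
  exists muX muY : R, 0 < muX /\ 0 < muY /\
    (forall y, Y y -> strongly_convex_on X muX (fun x => L x y)) /\
    (forall x, X x -> strongly_convex_on Y muY (fun y => - L x y)).

Definition saddle_point {n m : nat} (X : set 'rV[R]_n) (Y : set 'rV[R]_m)
  (L : 'rV[R]_n -> 'rV[R]_m -> R) xs ys : Prop :=
  X xs /\ Y ys /\ forall x y, X x -> Y y -> L xs y <= L xs ys <= L x ys.

Definition wgap {n m : nat} (L : 'rV[R]_n -> 'rV[R]_m -> R) xs ys x y : R :=
  L x ys - L xs y.

Definition conv_hull {n : nat} (A : seq 'rV[R]_n) : set 'rV[R]_n :=
  [set x | exists a : 'rV[R]_n -> R, (forall v, v \in A -> 0 <= a v) /\
     \sum_(v <- undup A) a v = 1 /\ x = \sum_(v <- undup A) a v *: v].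

Definition pos_comb {n : nat} (A S : seq 'rV[R]_n) (x : 'rV[R]_n) : Prop :=
  uniq S /\ {subset S <= A} /\
  exists a : 'rV[R]_n -> R, (forall v, v \in S -> 0 < a v) /\
     \sum_(v <- S) a v = 1 /\ x = \sum_(v <- S) a v *: v.

Definition aff_hull {V : lmodType R} (K : set V) : set V :=
  [set z | exists (k : nat) (p : 'I_k -> V) (a : 'I_k -> R),
     (forall i, K (p i)) /\ \sum_(i < k) a i = 1 /\ z = \sum_(i < k) a i *: p i].

Definition relint {V : lmodType R} (sqn : V -> R) (K : set V) : set V :=
  [set x | K x /\ exists e : R, 0 < e /\
     forall z, aff_hull K z -> sqn (z - x) < e -> K z].

Definition sqnv {n : nat} (u : 'rV[R]_n) : R := dotv u u.
Definition sqnp {n m : nat} (p : 'rV[R]_n * 'rV[R]_m) : R := dotv p.1 p.1 + dotv p.2 p.2.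

Definition relbd {n : nat} (K : set 'rV[R]_n) : set 'rV[R]_n :=
  [set x | closure K x /\ ~ relint sqnv K x].

(* ---- the quantities C_f, mu_f^{xc}, mu_f^A for a function f with gradient gf
   on K; each returns the set of values whose sup/inf defines the constant *)
Definition curv_vals {n : nat} (K : set 'rV[R]_n) (f : 'rV[R]_n -> R)
  (gf : 'rV[R]_n -> 'rV[R]_n) : set R :=
  [set r | exists x s v (g : R), K x /\ K s /\ K v /\ 0 < g /\
     K (x + g *: (s - v)) /\
     r = 2 / g ^+ 2 * (f (x + g *: (s - v)) - f x - g * dotv (s - v) (gf x))].

Definition muint_vals {n : nat} (K : set 'rV[R]_n) (xc : 'rV[R]_n)
  (f : 'rV[R]_n -> R) (gf : 'rV[R]_n -> 'rV[R]_n) : set R :=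
  [set r | exists x (g : R) s (lam : R), K x /\ x <> xc /\ 0 < g <= 1 /\
     1 <= lam /\ s = x + lam *: (xc - x) /\ relbd K s /\
     r = 2 / g ^+ 2 * (f (x + g *: (s - x)) - f x
                        - dotv (x + g *: (s - x) - x) (gf x))].

Definition is_vS {n : nat} (g : 'rV[R]_n) (S : seq 'rV[R]_n) v : Prop :=
  v \in S /\ forall u, u \in S -> dotv g u <= dotv g v.

Definition is_vf {n : nat} (A : seq 'rV[R]_n) (g x : 'rV[R]_n) v : Prop :=
  (exists S, pos_comb A S x /\ is_vS g S v) /\
  forall S v', pos_comb A S x -> is_vS g S v' -> dotv g v <= dotv g v'.

Definition is_sf {n : nat} (A : seq 'rV[R]_n) (g : 'rV[R]_n) s : Prop :=
  s \in A /\ forall u, u \in A -> dotv g s <= dotv g u.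

Definition gammaA {n : nat} (g x x' s v : 'rV[R]_n) : R :=
  dotv (- g) (x' - x) / dotv (- g) (s - v).

Definition muA_vals {n : nat} (K : set 'rV[R]_n) (A : seq 'rV[R]_n)
  (f : 'rV[R]_n -> R) (gf : 'rV[R]_n -> 'rV[R]_n) : set R :=
  [set r | exists x x' s v, K x /\ K x' /\ dotv (gf x) (x' - x) < 0 /\
     is_sf A (gf x) s /\ is_vf A (gf x) x v /\
     r = 2 / (gammaA (gf x) x x' s v) ^+ 2 *
           (f x' - f x - dotv (x' - x) (gf x))].

Local Open Scope ereal_scope.

Definition CL_e {n m : nat} (X : set 'rV[R]_n) (Y : set 'rV[R]_m)
  (L : 'rV[R]_n -> 'rV[R]_m -> R) : \bar R :=
  (ereal_sup [set r%:E | r in \bigcup_(y in Y)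
                 curv_vals X (fun x => L x y) (fun x => gradx L x y)] +
   ereal_sup [set r%:E | r in \bigcup_(x in X)
                 curv_vals Y (fun y => - L x y)%R (fun y => - grady L x y)%R])
  * (2^-1)%:E.

Definition muint_e {n m : nat} (X : set 'rV[R]_n) (Y : set 'rV[R]_m)
  (L : 'rV[R]_n -> 'rV[R]_m -> R) xs ys : \bar R :=
  mine (ereal_inf [set r%:E | r in \bigcup_(y in Y)
          muint_vals X xs (fun x => L x y) (fun x => gradx L x y)])
       (ereal_inf [set r%:E | r in \bigcup_(x in X)
          muint_vals Y ys (fun y => - L x y)%R (fun y => - grady L x y)%R]).

Definition muA_e {n m : nat} (X : set 'rV[R]_n) (Y : set 'rV[R]_m)
  (L : 'rV[R]_n -> 'rV[R]_m -> R) (A : seq 'rV[R]_n) (B : seq 'rV[R]_m) : \bar R :=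
  mine (ereal_inf [set r%:E | r in \bigcup_(y in Y)
          muA_vals X A (fun x => L x y) (fun x => gradx L x y)])
       (ereal_inf [set r%:E | r in \bigcup_(x in X)
          muA_vals Y B (fun y => - L x y)%R (fun y => - grady L x y)%R]).

Definition ML_e {n m : nat} (X : set 'rV[R]_n) (Y : set 'rV[R]_m)
  (L : 'rV[R]_n -> 'rV[R]_m -> R) xs ys : \bar R :=
  maxe
    (ereal_sup [set r%:E | r in [set r : R | exists y x s v, Y y /\ y <> ys /\
        X x /\ X s /\ X v /\
        (r = dotv (s - v) ((Num.sqrt (L xs ys - L xs y))^-1 *:
                          (gradx L x ys - gradx L x y)))%R]])
    (ereal_sup [set r%:E | r in [set r : R | exists x y s v, X x /\ x <> xs /\
        Y y /\ Y s /\ Y v /\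
        (r = dotv (s - v) ((Num.sqrt (L x ys - L xs ys))^-1 *:
                          (grady L x y - grady L xs y)))%R]]).

Local Close Scope ereal_scope.

Definition inv_sqrt_e (mu : \bar R) : R :=
  match mu with EFin r => (Num.sqrt r)^-1 | _ => 0 end.

Definition nu_const (c M : R) (mu : \bar R) : R := c - M * inv_sqrt_e mu.

(* ---- FW / SP-AFW quantities; r(z) = (grad_x L, - grad_y L) *)
Definition neg_r_dot {n m : nat} (L : 'rV[R]_n -> 'rV[R]_m -> R) xt yt
  (dx : 'rV[R]_n) (dy : 'rV[R]_m) : R :=
  - dotv (gradx L xt yt) dx + dotv (grady L xt yt) dy.

Definition FW_atom {n m : nat} (X : set 'rV[R]_n) (Y : set 'rV[R]_m)
  (L : 'rV[R]_n -> 'rV[R]_m -> R) xt yt sx sy : Prop :=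
  X sx /\ Y sy /\ forall s1 s2, X s1 -> Y s2 ->
    dotv sx (gradx L xt yt) + dotv sy (- grady L xt yt) <=
    dotv s1 (gradx L xt yt) + dotv s2 (- grady L xt yt).

Definition active_set {n : nat} (A : seq 'rV[R]_n) (S : seq 'rV[R]_n)
  (al : 'rV[R]_n -> R) (x : 'rV[R]_n) : Prop :=
  uniq S /\ {subset S <= A} /\ (forall v, v \in S -> 0 < al v) /\
  \sum_(v <- S) al v = 1 /\ x = \sum_(v <- S) al v *: v.

Definition away_atom {n m : nat} (L : 'rV[R]_n -> 'rV[R]_m -> R) xt yt
  (Sx : seq 'rV[R]_n) (Sy : seq 'rV[R]_m) vx vy : Prop :=
  vx \in Sx /\ vy \in Sy /\ forall u1 u2, u1 \in Sx -> u2 \in Sy ->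
    dotv u1 (gradx L xt yt) + dotv u2 (- grady L xt yt) <=
    dotv vx (gradx L xt yt) + dotv vy (- grady L xt yt).

Definition away_ratio (a : R) : \bar R :=
  if a == 1 then +oo%E else (a / (1 - a))%:E.

End SPDefs.

(* Main.v *)
Require Import Defs.
From HB Require Import structures.
From mathcomp Require Import all_boot all_order all_algebra.
From mathcomp Require Import all_classical all_reals all_analysis.
From mathcomp Require Import ring lra.
Import Order.TTheory GRing.Theory Num.Theory.
Import numFieldNormedType.Exports.
Local Open Scope classical_set_scope.
Local Open Scope ring_scope.
Set Implicit Arguments. Unset Strict Implicit. Unset Printing Implicit Defensive.


Section Helpers.
Context {R : realType}.

Lemma dotvC n (u v : 'rV[R]_n) : dotv u v = dotv v u.
Proof. by apply: eq_bigr => i _; rewrite mulrC. Qed.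

Lemma dotvDl n (u w v : 'rV[R]_n) : dotv (u + w) v = dotv u v + dotv w v.
Proof. by rewrite /dotv -big_split; apply: eq_bigr => i _; rewrite mxE mulrDl. Qed.

Lemma dotvZl n a (u v : 'rV[R]_n) : dotv (a *: u) v = a * dotv u v.
Proof. by rewrite /dotv mulr_sumr; apply: eq_bigr => i _; rewrite mxE mulrA. Qed.

Lemma dotvNl n (u v : 'rV[R]_n) : dotv (- u) v = - dotv u v.
Proof. by rewrite -scaleN1r dotvZl mulN1r. Qed.

Lemma dotvBl n (u w v : 'rV[R]_n) : dotv (u - w) v = dotv u v - dotv w v.
Proof. by rewrite dotvDl dotvNl. Qed.

Lemma dotvDr n (u w v : 'rV[R]_n) : dotv v (u + w) = dotv v u + dotv v w.
Proof. by rewrite dotvC dotvDl !(dotvC v). Qed.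
Lemma dotvZr n a (u v : 'rV[R]_n) : dotv v (a *: u) = a * dotv v u.
Proof. by rewrite dotvC dotvZl dotvC. Qed.
Lemma dotvNr n (u v : 'rV[R]_n) : dotv v (- u) = - dotv v u.
Proof. by rewrite dotvC dotvNl dotvC. Qed.
Lemma dotvBr n (u w v : 'rV[R]_n) : dotv v (u - w) = dotv v u - dotv v w.
Proof. by rewrite dotvDr dotvNr. Qed.

Lemma dotv0l n (v : 'rV[R]_n) : dotv 0 v = 0.
Proof. by rewrite /dotv big1 // => i _; rewrite mxE mul0r. Qed.

Lemma dotv_suml n (T : Type) (s : seq T) (F : T -> 'rV[R]_n) v :
  dotv (\sum_(x <- s) F x) v = \sum_(x <- s) dotv (F x) v.
Proof.
elim: s => [|a s IH]; first by rewrite !big_nil dotv0l.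
by rewrite !big_cons dotvDl IH.
Qed.

Lemma dotv_ge0 n (u : 'rV[R]_n) : 0 <= dotv u u.
Proof. by apply: sumr_ge0 => i _; rewrite -expr2 sqr_ge0. Qed.

Lemma dotv_gt0 n (u : 'rV[R]_n) : u != 0 -> 0 < dotv u u.
Proof.
move=> u0; rewrite lt_def dotv_ge0 andbT; apply/negP => /eqP H.
move/eqP: H; rewrite psumr_eq0; last by move=> i _; rewrite -expr2 sqr_ge0.
move=> /allP H; move/negP: u0; apply; apply/eqP/rowP => i.
have := H i (mem_index_enum i); rewrite /= mulf_eq0 orbb => /eqP ->.
by rewrite mxE.
Qed.

Lemma convex_comb n (K : set 'rV[R]_n) (S : seq 'rV[R]_n) (b : 'rV[R]_n -> R) :
  convex_setR K -> (forall v, v \in S -> K v) -> (forall v, v \in S -> 0 <= b v) ->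
  \sum_(v <- S) b v = 1 -> K (\sum_(v <- S) b v *: v).
Proof.
move=> cK; elim: S b => [|u S IH] b KS b0 b1.
  by move: b1; rewrite big_nil => /eqP; rewrite eq_sym oner_eq0.
move: b1; rewrite !big_cons => b1.
have bS0 : forall v, v \in S -> 0 <= b v by move=> v vS; apply: b0; rewrite inE vS orbT.
have r0 : 0 <= \sum_(v <- S) b v by rewrite big_seq; apply: sumr_ge0.
have [rz|rnz] := eqVneq (\sum_(v <- S) b v) 0.
  have bz : forall v, v \in S -> b v = 0.
    move: rz => /eqP; rewrite big_seq psumr_eq0 // => /allP H v vS.
    by apply/eqP; apply: (implyP (H v vS)).
  rewrite big_seq big1 ?addr0; last by move=> v vS; rewrite bz // scale0r.
  move: b1; rewrite rz addr0 => ->; rewrite scale1r; apply: KS; exact: mem_head.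
set r := \sum_(v <- S) b v in b1 r0 rnz.
have rp : 0 < r by rewrite lt_def rnz r0.
have KS' : K (\sum_(v <- S) (b v / r) *: v).
  apply: IH.
  - by move=> v vS; apply: KS; rewrite inE vS orbT.
  - by move=> v vS; apply: divr_ge0 => //; apply: bS0.
  - by rewrite -mulr_suml mulfV.
have -> : \sum_(v <- S) b v *: v = r *: \sum_(v <- S) (b v / r) *: v.
  by rewrite scaler_sumr; apply: eq_bigr => v _; rewrite scalerA mulrCA mulfV ?mulr1.
have ru : r = 1 - b u by rewrite -b1 addrAC subrr add0r.
have bu0 : 0 <= b u by apply: b0; exact: mem_head.
rewrite {1}ru; apply: cK => //; first by apply: KS; exact: mem_head.
by rewrite bu0 /= -b1 lerDl.
Qed.

Lemma conv_hull_mem n (A : seq 'rV[R]_n) v : v \in A -> conv_hull A v.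
Proof.
move=> vA; exists (fun u => (u == v)%:R); split; first by move=> u _; rewrite ler0n.
have vA' : v \in undup A by rewrite mem_undup.
split.
  rewrite (bigD1_seq v) ?undup_uniq //= eqxx big1 ?addr0 // => u /negbTE ->.
  by [].
rewrite (bigD1_seq v) ?undup_uniq //= eqxx scale1r big1 ?addr0 // => u /negbTE ->.
by rewrite scale0r.
Qed.

Lemma seq_argmin (T : eqType) (s : seq T) (P : T -> Prop) (phi : T -> R) :
  (exists u, u \in s /\ P u) ->
  exists u, [/\ u \in s, P u & forall u', u' \in s -> P u' -> phi u <= phi u'].
Proof.
elim: s => [|a s IH]; first by case=> u [].
case=> u [uin Pu].
have [Pa|nPa] := pselect (P a).
  have [bS|nbS] := pselect (exists u, u \in s /\ P u).
    have [w [ws Pw wmin]] := IH bS.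
    have [le|lt] := leP (phi a) (phi w).
      exists a; split => //; first exact: mem_head.
      move=> u'; rewrite inE => /orP[/eqP->//|u's] Pu'.
      exact: le_trans le (wmin _ u's Pu').
    exists w; split => //; first by rewrite inE ws orbT.
    move=> u'; rewrite inE => /orP[/eqP->|u's] Pu'; first exact: ltW.
    exact: wmin.
  exists a; split => //; first exact: mem_head.
  move=> u'; rewrite inE => /orP[/eqP->//|u's] Pu'.
  by exfalso; apply: nbS; exists u'.
have bS : exists u, u \in s /\ P u.
  exists u; split => //; move: uin; rewrite inE => /orP[/eqP Hu|//].
  by exfalso; apply: nPa; rewrite -Hu.
have [w [ws Pw wmin]] := IH bS.
exists w; split => //; first by rewrite inE ws orbT.
move=> u'; rewrite inE => /orP[/eqP->|u's] Pu'; first by exfalso.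
exact: wmin.
Qed.

End Helpers.


Section Reals.
Context {R : realType}.

Lemma key_sqrt (mu gx gy hx hy ax ay : R) : 0 < mu -> 0 <= gx -> 0 <= gy ->
  0 <= hx -> 0 <= hy -> ax + ay = hx + hy ->
  (0 <= ax -> 2 * mu * ax <= gx ^+ 2) -> (0 <= ay -> 2 * mu * ay <= gy ^+ 2) ->
  Num.sqrt mu * (Num.sqrt hx + Num.sqrt hy) <= gx + gy.
Proof.
move=> mu0 gx0 gy0 hx0 hy0 eh Hx Hy.
have smu := sqr_sqrtr (ltW mu0); have shx := sqr_sqrtr hx0; have shy := sqr_sqrtr hy0.
have s1 := sqrtr_ge0 mu; have s2 := sqrtr_ge0 hx; have s3 := sqrtr_ge0 hy.
set a := Num.sqrt mu in smu s1 *; set b := Num.sqrt hx in shx s2 *;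
set c := Num.sqrt hy in shy s3 *.
have B : 2 * mu * (hx + hy) <= gx ^+ 2 + gy ^+ 2.
  have [ax0|ax0] := leP 0 ax; have [ay0|ay0] := leP 0 ay.
  - have := Hx ax0; have := Hy ay0; rewrite -eh; nra.
  - have := Hx ax0; rewrite -eh; have := sqr_ge0 gy; nra.
  - have := Hy ay0; rewrite -eh; have := sqr_ge0 gx; nra.
  - lra.
have A : (a * (b + c)) ^+ 2 <= (gx + gy) ^+ 2.
  have E1 : (gx ^+ 2 + gy ^+ 2) <= (gx + gy) ^+ 2 by nra.
  have E2 : (a * (b + c)) ^+ 2 <= 2 * mu * (hx + hy).
    rewrite exprMn smu sqrrD shx shy; have := sqr_ge0 (b - c); rewrite sqrrB shx shy.
    nra.
  lra.
have P : 0 <= a * (b + c) by apply: mulr_ge0 => //; apply: addr_ge0.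
have Q : 0 <= gx + gy by apply: addr_ge0.
nra.
Qed.

Lemma int_bound (mu lam q a G : R) : 0 < mu -> 0 < lam -> 0 <= a ->
  mu <= 2 * lam ^+ 2 * (q - a) -> lam * q <= G -> 2 * mu * a <= G ^+ 2.
Proof.
move=> mu0 l0 a0 H HG.
have q0 : 0 <= lam * q.
  have l2 : 0 < 2 * lam ^+ 2 by apply: mulr_gt0 => //; apply: exprn_gt0.
  have : 0 < q - a.
    rewrite -(pmulr_rgt0 _ l2); lra.
  move=> ?; apply: mulr_ge0; lra.
have : (lam * q) ^+ 2 <= G ^+ 2.
  have : lam * q <= G by [].
  have : 0 <= G by lra.
  nra.
have : 0 <= (q - 2 * a) ^+ 2 by apply: sqr_ge0.
have : 0 <= lam ^+ 2 by apply: sqr_ge0.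
nra.
Qed.

Lemma A_bound (mu q D a G : R) : 0 < mu -> 0 < a -> 0 <= D -> D <= G ->
  mu <= 2 / (q / D) ^+ 2 * (q - a) -> 2 * mu * a <= G ^+ 2.
Proof.
move=> mu0 a0 D0 DG H.
have [Dz|Dnz] := eqVneq D 0.
  by move: H; rewrite Dz invr0 mulr0 expr0n /= invr0 mulr0 mul0r; lra.
have [qz|qnz] := eqVneq q 0.
  by move: H; rewrite qz mul0r expr0n /= invr0 mulr0 mul0r; lra.
have Dp : 0 < D by rewrite lt_def Dnz.
have E : 2 / (q / D) ^+ 2 = 2 * D ^+ 2 / q ^+ 2.
  by field; rewrite Dnz qnz.
rewrite E in H.
have q2 : 0 < q ^+ 2 by rewrite exprn_even_gt0.
have H' : mu * q ^+ 2 <= 2 * D ^+ 2 * (q - a).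
  have -> : 2 * D ^+ 2 * (q - a) = (2 * D ^+ 2 / q ^+ 2 * (q - a)) * q ^+ 2.
    by field; rewrite qnz.
  by rewrite ler_pM2r.
have qa : 0 < q - a.
  have : 0 < mu * q ^+ 2 by apply: mulr_gt0.
  have : 0 < D ^+ 2 by apply: exprn_gt0.
  nra.
have : 0 <= (q - 2 * a) ^+ 2 by apply: sqr_ge0.
have : D ^+ 2 <= G ^+ 2 by nra.
nra.
Qed.

End Reals.


Section Diff.
Context {R : realType}.

Lemma diff_le (V : normedModType R) (f : V -> R) (a v : V) (B : R) :
  differentiable f a -> (forall h, 0 < h <= 1 -> f (a + h *: v) - f a <= h * B) ->
  'd f a v <= B.
Proof.
move=> df H.
rewrite -deriveE //.
have dv := @diff_derivable _ _ _ f a v df.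
have cv := cvg_dnbhs_at_right dv.
apply: (cvgr_to_le cv).
near=> h.
have h0 : 0 < h by near: h; exact: nbhs_right_gt.
have h1 : h <= 1 by near: h; exact: nbhs_right_le.
rewrite /= addrC.
have := H h; rewrite h0 h1 => /(_ isT) Hh.
rewrite -(ler_pM2l h0) mulrA mulfV ?gt_eqF // mul1r.
have -> : h *: v + a = a + h *: v by rewrite addrC.
by rewrite addrC.
Unshelve. all: by end_near.
Qed.

Lemma diff_ge (V : normedModType R) (f : V -> R) (a v : V) (B : R) :
  differentiable f a -> (forall h, 0 < h <= 1 -> h * B <= f (a + h *: v) - f a) ->
  B <= 'd f a v.
Proof.
move=> df H.
rewrite -deriveE //.
have dv := @diff_derivable _ _ _ f a v df.
have cv := cvg_dnbhs_at_right dv.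
apply: (cvgr_to_ge cv).
near=> h.
have h0 : 0 < h by near: h; exact: nbhs_right_gt.
have h1 : h <= 1 by near: h; exact: nbhs_right_le.
rewrite /= addrC.
have := H h; rewrite h0 h1 => /(_ isT) Hh.
rewrite -(ler_pM2l h0) mulrA mulfV ?gt_eqF // mul1r.
have -> : h *: v + a = a + h *: v by rewrite addrC.
by rewrite addrC.
Unshelve. all: by end_near.
Qed.

Lemma d_gradx n m (L : 'rV[R]_n -> 'rV[R]_m -> R) x y (dx : 'rV[R]_n) :
  'd (Lpair L) (x, y) (dx, 0) = dotv dx (gradx L x y).
Proof.
set phi := fun u : 'rV[R]_n => 'd (Lpair L) (x, y) (u, 0).
have phiD : forall u w, phi (u + w) = phi u + phi w.
  move=> u w; rewrite /phi -linearD; congr ('d _ _ _).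
  by apply: injective_projections; rewrite /= ?addr0.
have phiZ : forall c u, phi (c *: u) = c * phi u.
  move=> c u; rewrite /phi -[c * _]/(c *: _) -linearZ; congr ('d _ _ _).
  by apply: injective_projections; rewrite /= ?scaler0.
have phi0 : phi 0 = 0 by rewrite /phi linear0.
have phiS : forall (r : seq 'I_n) (F : 'I_n -> 'rV[R]_n), phi (\sum_(i <- r) F i) = \sum_(i <- r) phi (F i).
  move=> r F; elim: r => [|a r IH]; first by rewrite !big_nil.
  by rewrite !big_cons phiD IH.
rewrite -/(phi dx) [in LHS](row_sum_delta dx) phiS /dotv.
by apply: eq_bigr => i _; rewrite phiZ mxE.
Qed.
Lemma d_grady n m (L : 'rV[R]_n -> 'rV[R]_m -> R) x y (dy : 'rV[R]_m) :
  'd (Lpair L) (x, y) (0, dy) = dotv dy (grady L x y).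
Proof.
set phi := fun u : 'rV[R]_m => 'd (Lpair L) (x, y) (0, u).
have phiD : forall u w, phi (u + w) = phi u + phi w.
  move=> u w; rewrite /phi -linearD; congr ('d _ _ _).
  by apply: injective_projections; rewrite /= ?addr0.
have phiZ : forall c u, phi (c *: u) = c * phi u.
  move=> c u; rewrite /phi -[c * _]/(c *: _) -linearZ; congr ('d _ _ _).
  by apply: injective_projections; rewrite /= ?scaler0.
have phi0 : phi 0 = 0 by rewrite /phi linear0.
have phiS : forall (r : seq 'I_m) (F : 'I_m -> 'rV[R]_m), phi (\sum_(i <- r) F i) = \sum_(i <- r) phi (F i).
  move=> r F; elim: r => [|a r IH]; first by rewrite !big_nil.
  by rewrite !big_cons phiD IH.
rewrite -/(phi dy) [in LHS](row_sum_delta dy) phiS /dotv.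
by apply: eq_bigr => i _; rewrite phiZ mxE.
Qed.


Lemma aux5 (F a b mu t D : R) : F <= t * a + (1 - t) * b - mu / 2 * t * (1 - t) * D ->
  0 <= mu -> 0 <= t <= 1 -> 0 <= D -> F - b <= t * (a - b).
Proof.
move=> H m0 /andP[t0 t1] D0.
have : 0 <= mu / 2 * t * (1 - t) * D.
  apply: mulr_ge0 => //; apply: mulr_ge0; last lra.
  by apply: mulr_ge0 => //; apply: divr_ge0.
lra.
Qed.

Lemma aux6 (a b c h : R) : - a - - c <= h * (- b - - c) -> h * (b - c) <= a - c.
Proof. move=> H; have : h * (- b - - c) = - (h * (b - c)) by ring. lra. Qed.

Lemma grad_x n m (X : set 'rV[R]_n) (L : 'rV[R]_n -> 'rV[R]_m -> R) x x' y mu :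
  X x -> X x' -> differentiable (Lpair L) (x, y) -> 0 <= mu ->
  strongly_convex_on X mu (fun x => L x y) ->
  dotv (x' - x) (gradx L x y) <= L x' y - L x y.
Proof.
move=> Xx Xx' df m0 sc.
rewrite -d_gradx; apply: diff_le => // h /andP[h0 h1].
have -> : (x, y) + h *: (x' - x, 0) = (x + h *: (x' - x), y).
  by apply: injective_projections; rewrite /= ?scaler0 ?addr0.
rewrite /Lpair /=.
have E : h *: x' + (1 - h) *: x = x + h *: (x' - x).
  by rewrite scalerBl scale1r scalerBr addrCA.
have := sc x' x h Xx' Xx; rewrite E h1 (ltW h0) => /(_ isT) H.
apply: (aux5 H) => //; first by rewrite (ltW h0).
exact: dotv_ge0.
Qed.

Lemma grad_y n m (Y : set 'rV[R]_m) (L : 'rV[R]_n -> 'rV[R]_m -> R) x y y' mu :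
  Y y -> Y y' -> differentiable (Lpair L) (x, y) -> 0 <= mu ->
  strongly_convex_on Y mu (fun y => - L x y) ->
  L x y' - L x y <= dotv (y' - y) (grady L x y).
Proof.
move=> Yy Yy' df m0 sc.
rewrite -d_grady; apply: diff_ge => // h /andP[h0 h1].
have -> : (x, y) + h *: (0, y' - y) = (x, y + h *: (y' - y)).
  by apply: injective_projections; rewrite /= ?scaler0 ?addr0.
rewrite /Lpair /=.
have E : h *: y' + (1 - h) *: y = y + h *: (y' - y).
  by rewrite scalerBl scale1r scalerBr addrCA.
have := sc y' y h Yy' Yy; rewrite E h1 (ltW h0) => /(_ isT) H.
have := aux5 H m0; rewrite (ltW h0) h1 => /(_ isT (dotv_ge0 _)).
exact: aux6.
Qed.

End Diff.


Section Bd.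
Context {R : realType}.

Lemma compact_bnd n (X : set 'rV[R]_n) : compact X -> exists M, forall y, X y -> `|y| <= M.
Proof.
move=> /compact_bounded [M0 [_ H]]; exists (M0 + 1); apply: H; lra.
Qed.

End Bd.


Section Ray.
Context {R : realType}.

Lemma ray_boundary n (X : set 'rV[R]_n) (x xc : 'rV[R]_n) :
  compact X -> X x -> X xc -> x <> xc ->
  exists lam : R, 1 <= lam /\ relbd X (x + lam *: (xc - x)) /\ X (x + lam *: (xc - x)).
Proof.
move=> cX Xx Xxc nx.
set d := xc - x.
have d0 : d != 0 by rewrite subr_eq0; apply/eqP => /esym.
have nd : 0 < `|d| by rewrite normr_gt0.
pose Lam := [set l : R | 0 <= l /\ X (x + l *: d)].
have L1 : Lam 1 by split => //; rewrite scale1r /d addrC subrK.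
have [M HM] := compact_bnd cX.
have ub : ubound Lam ((M + M) / `|d|).
  move=> l [l0 Xl]; rewrite ler_pdivlMr //.
  have := HM _ Xl; have := HM _ Xx.
  have : `|l *: d| <= `|x + l *: d| + `|x|.
    have -> : `|l *: d| = `|(x + l *: d) - x| by rewrite addrAC subrr add0r.
    exact: ler_normB.
  by rewrite normrZ ger0_norm //; lra.
have hs : has_sup Lam by split; [exists 1|exists ((M + M) / `|d|)].
set lam := sup Lam.
have lam1 : 1 <= lam by apply: sup_upper_bound.
set s := x + lam *: d.
have cls : closure X s.
  move=> B /nbhs_ballP [e e0 HB].
  have [l [l0 Xl] Hl] := sup_adherent (divr_gt0 e0 nd) hs.
  exists (x + l *: d); split => //; apply: HB.
  have lle : l <= lam by apply: sup_upper_bound.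
  rewrite -ball_normE /ball_ /= /s [x + lam *: d]addrC addrKA -scalerBl normrZ ger0_norm.
    2: by rewrite subr_ge0.
  move: Hl; rewrite -/lam => Hl; rewrite -ltr_pdivlMr //; lra.
have Xs : X s.
  have : closed X by apply: compact_closed => //; exact: norm_hausdorff.
  by rewrite closure_id => ->.
exists lam; split => //; split => //; split => //.
move=> [_ [e [e0 He]]].
set S := sqnv d.
have S0 : 0 < S by apply: dotv_gt0.
set del := e / (2 * (S + e)).
have del0 : 0 < del by apply: divr_gt0 => //; apply: mulr_gt0 => //; lra.
have delE : del * (2 * (S + e)) = e by rewrite /del mulfVK // gt_eqF //; apply: mulr_gt0 => //; lra.
have Xz : X (x + (lam + del) *: d).
  apply: He.
    exists 2%N, (fun i => if i == ord0 then x else xc),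
      (fun i => if i == ord0 then 1 - (lam + del) else lam + del).
    split; first by move=> i; case: ifP.
    rewrite !big_ord_recl !big_ord0 /=; split; first by ring.
    rewrite /d scalerBr scalerBl scale1r addr0. by rewrite addrA addrAC.
  rewrite /s scalerDl addrA [_ + del *: d]addrC addrK.
  rewrite /sqnv dotvZl dotvZr -/S mulrA.
  have : del < 1 by nra.
  move=> h1; have -> : dotv d d = S by [].
  have h2 : 0 < (1 - del) * (del * S) by apply: mulr_gt0; [lra|apply: mulr_gt0].
  nra.
have : Lam (lam + del) by split => //; lra.
move=> /(sup_upper_bound hs); rewrite -/lam; lra.
Qed.

End Ray.


Section E.
Context {R : realType}.

Lemma sum_fin (a b : \bar R) (r1 r2 : R) : (r1%:E <= a)%E -> (r2%:E <= b)%E ->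
  ((a + b) * (2^-1)%:E)%E \is a fin_num ->
  exists ca cb, a = ca%:E /\ b = cb%:E.
Proof.
have h2 : (0 < 2^-1 :> R) by rewrite invr_gt0.
move: a b => [a| |] [b| |] //= _ _; first by exists a, b.
- by rewrite /= gt0_mulye ?lte_fin.
- by rewrite /= gt0_mulye ?lte_fin.
- by rewrite /= gt0_mulye ?lte_fin.
Qed.

Variables (n m : nat) (X : set 'rV[R]_n) (Y : set 'rV[R]_m)
  (L : 'rV[R]_n -> 'rV[R]_m -> R) (xs : 'rV[R]_n) (ys : 'rV[R]_m).

Lemma CL_facts : X xs -> Y ys -> CL_e X Y L \is a fin_num ->
  exists cx cy, fine (CL_e X Y L) = (cx + cy) / 2 /\
   (forall y, Y y -> forall r, curv_vals X (fun x => L x y) (fun x => gradx L x y) r -> r <= cx) /\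
   (forall x, X x -> forall r, curv_vals Y (fun y => - L x y) (fun y => - grady L x y) r -> r <= cy).
Proof.
move=> Xxs Yys.
rewrite /CL_e.
set A := ereal_sup _; set B := ereal_sup _ => fin.
have mX : curv_vals X (fun x => L x ys) (fun x => gradx L x ys) 0.
  exists xs, xs, xs, 1; do 4!(split => //); split.
    by rewrite subrr scaler0 addr0.
  by rewrite subrr scaler0 addr0 subrr mul1r dotv0l subr0 mulr0.
have mY : curv_vals Y (fun y => - L xs y) (fun y => - grady L xs y) 0.
  exists ys, ys, ys, 1; do 4!(split => //); split.
    by rewrite subrr scaler0 addr0.
  by rewrite subrr scaler0 addr0 subrr mul1r dotv0l subr0 mulr0.
have hA : (0%:E <= A)%E by apply: ereal_sup_ubound; exists 0 => //; exists ys.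
have hB : (0%:E <= B)%E by apply: ereal_sup_ubound; exists 0 => //; exists xs.
have [ca [cb [eA eB]]] := sum_fin hA hB fin.
exists ca, cb; split.
  by rewrite eA eB.
split.
  move=> y Yy r Hr; rewrite -lee_fin -eA; apply: ereal_sup_ubound.
  by exists r => //; exists y.
move=> x Xx r Hr; rewrite -lee_fin -eB; apply: ereal_sup_ubound.
by exists r => //; exists x.
Qed.

End E.

Section ML.
Context {R : realType}.
Variables (n m : nat) (X : set 'rV[R]_n) (Y : set 'rV[R]_m)
  (L : 'rV[R]_n -> 'rV[R]_m -> R) (xs : 'rV[R]_n) (ys : 'rV[R]_m).

Lemma ML_facts : X xs -> Y ys -> ML_e X Y L xs ys \is a fin_num ->
  let M := fine (ML_e X Y L xs ys) in
  0 <= M /\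
  (forall y x s v, Y y -> y <> ys -> X x -> X s -> X v ->
     dotv (s - v) ((Num.sqrt (L xs ys - L xs y))^-1 *: (gradx L x ys - gradx L x y)) <= M) /\
  (forall x y s v, X x -> x <> xs -> Y y -> Y s -> Y v ->
     dotv (s - v) ((Num.sqrt (L x ys - L xs ys))^-1 *: (grady L x y - grady L xs y)) <= M).
Proof.
move=> Xxs Yys fin M.
have [M' eM] : exists M', ML_e X Y L xs ys = M'%:E.
  by move: fin; case: (ML_e X Y L xs ys) => [r| |] //= _; exists r.
have eM' : M = M' by rewrite /M eM.
rewrite eM'; move: eM; rewrite /ML_e.
set A := ereal_sup _; set B := ereal_sup _ => eM.
have H1 : forall y x s v, Y y -> y <> ys -> X x -> X s -> X v ->
     dotv (s - v) ((Num.sqrt (L xs ys - L xs y))^-1 *: (gradx L x ys - gradx L x y)) <= M'.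
  move=> y x s v Yy yn Xx Xs Xv; rewrite -lee_fin -eM le_max; apply/orP; left.
  apply: ereal_sup_ubound; exists (dotv (s - v) ((Num.sqrt (L xs ys - L xs y))^-1 *: (gradx L x ys - gradx L x y))) => //.
  by exists y, x, s, v.
have H2 : forall x y s v, X x -> x <> xs -> Y y -> Y s -> Y v ->
     dotv (s - v) ((Num.sqrt (L x ys - L xs ys))^-1 *: (grady L x y - grady L xs y)) <= M'.
  move=> x y s v Xx xn Yy Ys Yv; rewrite -lee_fin -eM le_max; apply/orP; right.
  apply: ereal_sup_ubound; exists (dotv (s - v) ((Num.sqrt (L x ys - L xs ys))^-1 *: (grady L x y - grady L xs y))) => //.
  by exists x, y, s, v.
split => //.
have [[y [Yy yn]]|ny] := pselect (exists y, Y y /\ y <> ys).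
  by have := H1 y xs xs xs Yy yn Xxs Xxs Xxs; rewrite subrr dotv0l.
have [[x [Xx xn]]|nx] := pselect (exists x, X x /\ x <> xs).
  by have := H2 x ys ys ys Xx xn Yys Yys Yys; rewrite subrr dotv0l.
exfalso.
have hA : A = -oo%E.
  apply/eqP; rewrite -leeNy_eq; apply: ge_ereal_sup => zz [r [y [x [s [v [Yy [yn _]]]]]] _].
  by exfalso; apply: ny; exists y.
have hB : B = -oo%E.
  apply/eqP; rewrite -leeNy_eq; apply: ge_ereal_sup => zz [r [x [y [s [v [Xx [xn _]]]]]] _].
  by exfalso; apply: nx; exists x.
by move: eM; rewrite hA hB.
Qed.

End ML.


Section Core.
Context {R : realType}.
Variables (n m : nat) (X : set 'rV[R]_n) (Y : set 'rV[R]_m)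
  (L : 'rV[R]_n -> 'rV[R]_m -> R) (xs : 'rV[R]_n) (ys : 'rV[R]_m).
Hypothesis cvX : convex_setR X.
Hypothesis cvY : convex_setR Y.
Hypothesis hsc : unif_strongly_convex_concave X Y L.
Hypothesis hsp : saddle_point X Y L xs ys.
Hypothesis hCL : CL_e X Y L \is a fin_num.
Hypothesis hML : ML_e X Y L xs ys \is a fin_num.

Lemma curv_real (g E c : R) : 0 < g -> 2 / g ^+ 2 * E <= c -> E <= g ^+ 2 * c / 2.
Proof.
move=> g0 H.
have g2 : 0 < g ^+ 2 by apply: exprn_gt0.
have -> : E = (2 / g ^+ 2 * E) * (g ^+ 2 / 2) by field; rewrite gt_eqF.
have -> : g ^+ 2 * c / 2 = c * (g ^+ 2 / 2) by rewrite mulrCA mulrA.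
apply: ler_wpM2r => //.
by apply: divr_ge0; [apply: ltW|].
Qed.

Lemma inv_mul_le (a b c : R) : 0 < a -> a^-1 * b <= c -> b <= c * a.
Proof.
move=> a0 H; rewrite -(ler_pM2l a0) mulrA mulfV ?gt_eqF ?mul1r // in H.
by rewrite mulrC.
Qed.

Lemma le_sub_add (a b c : R) : a - b <= c -> a <= b + c.
Proof. lra. Qed.

Lemma final_comb (A1 A0 B1 B0 px qx py qy M sx sy gam cx cy : R) :
  0 <= gam ->
  A1 - A0 - gam * px <= gam ^+ 2 * cx / 2 ->
  - B1 - - B0 - gam * (- py) <= gam ^+ 2 * cy / 2 ->
  px <= qx + M * sy -> - py <= - qy + M * sx ->
  A1 - B1 <= (A0 - B0) + gam * (- (- qx + qy) + M * (sx + sy)) + gam ^+ 2 * ((cx + cy) / 2).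
Proof.
move=> g0 E1 E2 MX MY.
have h1 : gam * px <= gam * (qx + M * sy) by apply: ler_wpM2l.
have h2 : gam * (- py) <= gam * (- qy + M * sx) by apply: ler_wpM2l.
have -> : gam ^+ 2 * ((cx + cy) / 2) = gam ^+ 2 * cx / 2 + gam ^+ 2 * cy / 2 by ring.
rewrite !mulrDr !mulrN in h1 h2.
have -> : gam * (- (- qx + qy) + M * (sx + sy)) = gam * qx - gam * qy + gam * (M * sx) + gam * (M * sy) by ring.
lra.
Qed.

Lemma hy_pos y : Y y -> y <> ys -> 0 < L xs ys - L xs y.
Proof.
move=> Yy yn.
case: hsc => [muX [muY [mX [mY [_ HY]]]]].
case: hsp => [Xxs [Yys Hs]].
have := HY xs Xxs y ys (2^-1) Yy Yys.
have h12 : 0 <= (2^-1 : R) <= 1 by apply/andP; split; rewrite ?invr_ge0 ?invf_le1 //; lra.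
move=> /(_ h12).
set mid := _ + _.
have Ymid : Y mid by apply: cvY.
have := Hs xs mid Xxs Ymid => /andP[Hm _].
have D : 0 < dotv (y - ys) (y - ys) by apply: dotv_gt0; rewrite subr_eq0; apply/eqP.
have : 0 < muY / 2 * 2^-1 * (1 - 2^-1) * dotv (y - ys) (y - ys).
  apply: mulr_gt0 => //; apply: mulr_gt0; last lra.
  by apply: mulr_gt0; [apply: divr_gt0|rewrite invr_gt0].
lra.
Qed.

Lemma hx_pos x : X x -> x <> xs -> 0 < L x ys - L xs ys.
Proof.
move=> Xx xn.
case: hsc => [muX [muY [mX [mY [HX _]]]]].
case: hsp => [Xxs [Yys Hs]].
have := HX ys Yys x xs (2^-1) Xx Xxs.
have h12 : 0 <= (2^-1 : R) <= 1 by apply/andP; split; rewrite ?invr_ge0 ?invf_le1 //; lra.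
move=> /(_ h12).
set mid := _ + _.
have Xmid : X mid by apply: cvX.
have := Hs mid ys Xmid Yys => /andP[_ Hm].
have D : 0 < dotv (x - xs) (x - xs) by apply: dotv_gt0; rewrite subr_eq0; apply/eqP.
have : 0 < muX / 2 * 2^-1 * (1 - 2^-1) * dotv (x - xs) (x - xs).
  apply: mulr_gt0 => //; apply: mulr_gt0; last lra.
  by apply: mulr_gt0; [apply: divr_gt0|rewrite invr_gt0].
lra.
Qed.

Lemma descent xt yt s1 v1 s2 v2 gam : X xt -> Y yt -> X s1 -> X v1 -> Y s2 -> Y v2 ->
  0 <= gam -> X (xt + gam *: (s1 - v1)) -> Y (yt + gam *: (s2 - v2)) ->
  wgap L xs ys (xt + gam *: (s1 - v1)) (yt + gam *: (s2 - v2)) <=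
  wgap L xs ys xt yt + gam * (- neg_r_dot L xt yt (s1 - v1) (s2 - v2)
     + fine (ML_e X Y L xs ys) * (Num.sqrt (L xt ys - L xs ys) + Num.sqrt (L xs ys - L xs yt)))
  + gam ^+ 2 * fine (CL_e X Y L).
Proof.
move=> Xxt Yyt Xs1 Xv1 Ys2 Yv2 g0 Xn Yn.
case: (hsp) => [Xxs [Yys Hs]].
have [g00|gp] := eqVneq gam 0.
  by rewrite g00 !scale0r !addr0 mul0r expr0n /= mul0r !addr0.
have gp' : 0 < gam by rewrite lt_def gp g0.
have [cx [cy [eC [Cx Cy]]]] := CL_facts Xxs Yys hCL.
have [M0 [H1 H2]] := ML_facts Xxs Yys hML.
set M := fine (ML_e X Y L xs ys) in M0 H1 H2 *.
rewrite eC.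
set dx := s1 - v1 in Xn *; set dy := s2 - v2 in Yn *.
have E1 := Cx ys Yys (2 / gam ^+ 2 * (L (xt + gam *: dx) ys - L xt ys - gam * dotv dx (gradx L xt ys))).
have {E1} E1 : L (xt + gam *: dx) ys - L xt ys - gam * dotv dx (gradx L xt ys) <= gam ^+ 2 * cx / 2.
  apply: curv_real => //; apply: E1; by exists xt, s1, v1, gam.
have E2 := Cy xs Xxs (2 / gam ^+ 2 * (- L xs (yt + gam *: dy) - - L xs yt - gam * dotv dy (- grady L xs yt))).
have {E2} E2 : - L xs (yt + gam *: dy) - - L xs yt - gam * dotv dy (- grady L xs yt) <= gam ^+ 2 * cy / 2.
  apply: curv_real => //; apply: E2; by exists yt, s2, v2, gam.
have MX : dotv dx (gradx L xt ys) <= dotv dx (gradx L xt yt) + M * Num.sqrt (L xs ys - L xs yt).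
  have [ye|yn] := eqVneq yt ys.
    by rewrite ye subrr sqrtr0 mulr0 addr0.
  have yn' : yt <> ys by apply/eqP.
  have hp := hy_pos Yyt yn'.
  have sp : 0 < Num.sqrt (L xs ys - L xs yt) by rewrite sqrtr_gt0.
  have := H1 yt xt s1 v1 Yyt yn' Xxt Xs1 Xv1.
  rewrite -/dx dotvZr dotvBr => HH.
  have : dotv dx (gradx L xt ys) - dotv dx (gradx L xt yt) <= M * Num.sqrt (L xs ys - L xs yt).
    have isp : 0 < (Num.sqrt (L xs ys - L xs yt))^-1 by rewrite invr_gt0.
    exact: inv_mul_le.
  exact: le_sub_add.
have MY : - dotv dy (grady L xs yt) <= - dotv dy (grady L xt yt) + M * Num.sqrt (L xt ys - L xs ys).
  have [xe|xn] := eqVneq xt xs.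
    by rewrite xe subrr sqrtr0 mulr0 addr0.
  have xn' : xt <> xs by apply/eqP.
  have hp := hx_pos Xxt xn'.
  have sp : 0 < Num.sqrt (L xt ys - L xs ys) by rewrite sqrtr_gt0.
  have := H2 xt yt s2 v2 Xxt xn' Yyt Ys2 Yv2.
  rewrite -/dy dotvZr dotvBr => HH.
  have : dotv dy (grady L xt yt) - dotv dy (grady L xs yt) <= M * Num.sqrt (L xt ys - L xs ys).
    exact: inv_mul_le.
  move=> h; apply: le_sub_add; rewrite opprK addrC; exact: h.
rewrite /wgap /neg_r_dot (dotvC (gradx L xt yt)) (dotvC (grady L xt yt)).
apply: (final_comb (px := dotv dx (gradx L xt ys)) (py := dotv dy (grady L xs yt))) => //.
by move: E2; rewrite dotvNr.
Qed.

End Core.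


Section Nu.
Context {R : realType}.

Lemma nu_comb (mue : \bar R) (M gx gy hx hy ax ay : R) : (0 < mue)%E -> 0 <= M ->
  0 <= gx -> 0 <= gy -> 0 <= hx -> 0 <= hy -> ax + ay = hx + hy ->
  (0 < ax -> mue <> +oo%E /\ forall mu, mue = mu%:E -> 2 * mu * ax <= gx ^+ 2) ->
  (0 < ay -> mue <> +oo%E /\ forall mu, mue = mu%:E -> 2 * mu * ay <= gy ^+ 2) ->
  M * (Num.sqrt hx + Num.sqrt hy) <= M * inv_sqrt_e mue * (gx + gy).
Proof.
move=> mu0 M0 gx0 gy0 hx0 hy0 eh Hx Hy.
case E : mue mu0 Hx Hy => [mu| |] //= mu0 Hx Hy.
- rewrite lte_fin in mu0.
  have K : Num.sqrt mu * (Num.sqrt hx + Num.sqrt hy) <= gx + gy.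
    apply: (key_sqrt (ax := ax) (ay := ay)) => //.
      move=> ax0; have [az|ap] := eqVneq ax 0; first by rewrite az mulr0 sqr_ge0.
      by apply: (Hx _).2 => //; rewrite lt_def ap ax0.
    move=> ay0; have [az|ap] := eqVneq ay 0; first by rewrite az mulr0 sqr_ge0.
    by apply: (Hy _).2 => //; rewrite lt_def ap ay0.
  have smu : 0 < Num.sqrt mu by rewrite sqrtr_gt0.
  rewrite -mulrA; apply: ler_wpM2l => //.
  rewrite -(ler_pM2l smu) mulrA mulfV ?mul1r //; by rewrite gt_eqF.
- have ax0 : ax <= 0 by rewrite leNgt; apply/negP => /Hx [].
  have ay0 : ay <= 0 by rewrite leNgt; apply/negP => /Hy [].
  have -> : hx = 0 by lra.
  have -> : hy = 0 by lra.
  by rewrite sqrtr0 addr0 !mulr0 mul0r.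
Qed.

End Nu.


Section Gen.
Context {R : realType}.

Lemma aux1 (mu lam fc ft d : R) : mu <= 2 / lam^-1 ^+ 2 * (fc - ft - d) ->
  mu <= 2 * lam ^+ 2 * (- d - (ft - fc)).
Proof.
rewrite exprVn invrK => H; apply: (le_trans H); rewrite le_eqVlt; apply/orP; left.
by apply/eqP; ring.
Qed.

Lemma aux2 (G a b c lam q : R) : b <= c -> c = a - lam * q -> G = a - b -> lam * q <= G.
Proof. move=> H Hc HG; rewrite HG; rewrite Hc in H; lra. Qed.

Lemma int_generic k (K : set 'rV[R]_k) (xc xt : 'rV[R]_k) (f : 'rV[R]_k -> R)
  (gf : 'rV[R]_k -> 'rV[R]_k) (sv : 'rV[R]_k) (mue : \bar R) :
  compact K -> K xt -> K xc -> (0 < mue)%E ->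
  (forall r, muint_vals K xc f gf r -> (mue <= r%:E)%E) ->
  (forall s, K s -> dotv sv (gf xt) <= dotv s (gf xt)) ->
  0 < f xt - f xc ->
  mue <> +oo%E /\ forall mu, mue = mu%:E -> 2 * mu * (f xt - f xc) <= (dotv (xt - sv) (gf xt)) ^+ 2.
Proof.
move=> cK Kxt Kxc mu0 Hmu FW ax0.
have xn : xt <> xc by move=> e; move: ax0; rewrite e subrr ltxx.
have [lam [l1 [bd Ks]]] := ray_boundary cK Kxt Kxc xn.
set s := xt + lam *: (xc - xt) in bd Ks.
have l0 : 0 < lam by lra.
have ln0 : lam != 0 by rewrite gt_eqF.
set r := 2 / lam^-1 ^+ 2 * (f (xt + lam^-1 *: (s - xt)) - f xt - dotv (xt + lam^-1 *: (s - xt) - xt) (gf xt)).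
have Hr : muint_vals K xc f gf r.
  exists xt, lam^-1, s, lam; split => //; split => //; split.
    by rewrite invr_gt0 l0 /= invf_le1.
  by [].
have Ex : xt + lam^-1 *: (s - xt) = xc.
  by rewrite /s addrAC subrr add0r scalerA mulVf // scale1r addrC subrK.
have lr := Hmu r Hr.
split; first by move=> e; move: lr; rewrite e.
move=> mu emu; move: lr; rewrite emu lee_fin => lr.
have mup : 0 < mu by move: mu0; rewrite emu lte_fin.
apply: (int_bound (lam := lam) (q := dotv (xt - xc) (gf xt))) => //; first exact: ltW.
  move: lr; rewrite /r Ex => /aux1.
  by rewrite -(opprB xt xc) dotvNl opprK.
have := FW s Ks.
move=> H.
apply: (aux2 H).
  by rewrite /s dotvDl dotvZl -(opprB xt xc) dotvNl mulrN.
by rewrite dotvBl.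
Qed.

Lemma aux3 (a b c d : R) : a <= b -> d <= c -> a - c <= b - d.
Proof. lra. Qed.

Lemma aux4 (fc ft d : R) : fc - ft - d = - d - (ft - fc).
Proof. ring. Qed.

Lemma A_generic k (A : seq 'rV[R]_k) (xc xt : 'rV[R]_k) (f : 'rV[R]_k -> R)
  (gf : 'rV[R]_k -> 'rV[R]_k) (sv : 'rV[R]_k) (S : seq 'rV[R]_k) (al : 'rV[R]_k -> R)
  (vS : 'rV[R]_k) (mue : \bar R) :
  conv_hull A xt -> conv_hull A xc -> (0 < mue)%E ->
  (forall r, muA_vals (conv_hull A) A f gf r -> (mue <= r%:E)%E) ->
  (forall s, conv_hull A s -> dotv sv (gf xt) <= dotv s (gf xt)) ->
  active_set A S al xt -> vS \in S ->
  (forall u, u \in S -> dotv u (gf xt) <= dotv vS (gf xt)) ->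
  dotv (xc - xt) (gf xt) <= f xc - f xt ->
  0 <= dotv (vS - sv) (gf xt) /\
  (0 < f xt - f xc -> mue <> +oo%E /\
     forall mu, mue = mu%:E -> 2 * mu * (f xt - f xc) <= (dotv (vS - sv) (gf xt)) ^+ 2).
Proof.
move=> Kxt Kxc mu0 Hmu FW act vSS vmax grad.
set g := gf xt.
have [Suniq [subA [alp [al1 xtE]]]] := act.
have xtv : dotv xt g <= dotv vS g.
  rewrite {1}xtE dotv_suml.
  have -> : dotv vS g = \sum_(u <- S) al u * dotv vS g by rewrite -mulr_suml al1 mul1r.
  rewrite big_seq [X in _ <= X]big_seq; apply: ler_sum => u uS.
  by rewrite dotvZl; apply: ler_wpM2l; [apply: ltW; apply: alp|apply: vmax].
have G0 : 0 <= dotv (vS - sv) g.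
  rewrite dotvBl subr_ge0; exact: (le_trans (FW xt Kxt) xtv).
split => // a0.
have vA : vS \in A by apply: subA.
have [s [sA _ smin]] := @seq_argmin _ _ A (fun _ => True) (dotv g) (ex_intro _ vS (conj vA I)).
pose P := fun u => exists S', pos_comb A S' xt /\ is_vS g S' u.
have PvS : P vS.
  exists S; split; first by split => //; split => //; exists al.
  by split => // u uS; rewrite !(dotvC g); apply: vmax.
have [v [vA' Pv vmin]] := @seq_argmin _ _ A P (dotv g) (ex_intro _ vS (conj vA PvS)).
have sf : is_sf A g s by split => // u uA; apply: smin.
have vf : is_vf A g xt v.
  split => // S' v' pc hv; apply: vmin.
    by case: pc => [_ [sub _]]; apply: sub; case: hv.
  by exists S'.
have neg : dotv g (xc - xt) < 0.
  rewrite dotvC; apply: (le_lt_trans grad); rewrite -opprB oppr_lt0 //.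
set r := 2 / (gammaA g xt xc s v) ^+ 2 * (f xc - f xt - dotv (xc - xt) g).
have Hr : muA_vals (conv_hull A) A f gf r.
  by exists xt, xc, s, v; do 5!(split => //).
have lr := Hmu r Hr.
split; first by move=> e; move: lr; rewrite e.
move=> mu emu; move: lr; rewrite emu lee_fin => lr.
have mup : 0 < mu by move: mu0; rewrite emu lte_fin.
apply: (A_bound (q := dotv (- g) (xc - xt)) (D := dotv (- g) (s - v))) => //.
- by rewrite dotvNl dotvBr opprB subr_ge0; apply: smin.
- rewrite dotvNl dotvBr opprB dotvBl !(dotvC g); apply: aux3.
    by rewrite !(dotvC _ g); apply: vmin.
  by apply: FW; apply: conv_hull_mem.
- move: lr; rewrite /r /gammaA -/g.
  by rewrite (dotvNl g (xc - xt)) (dotvC (xc - xt)) aux4.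
Qed.

End Gen.


Section Away.
Context {R : realType}.

Lemma aux7 (a g : R) : 0 <= g -> a <= 1 -> a != 1 -> g <= a / (1 - a) -> 0 <= (1 + g) * a - g.
Proof.
move=> g0 a1 an H.
have a1' : 0 < 1 - a by rewrite subr_gt0 lt_def eq_sym an a1.
rewrite ler_pdivlMr // in H.
nra.
Qed.

Lemma away_feas k (K : set 'rV[R]_k) (A S : seq 'rV[R]_k) (al : 'rV[R]_k -> R) xt v (gam : R) :
  convex_setR K -> (forall u, u \in A -> K u) -> active_set A S al xt -> v \in S ->
  0 <= gam -> (gam%:E <= away_ratio (al v))%E -> K (xt + gam *: (xt - v)).
Proof.
move=> cK KA [Su [SA [alp [al1 xtE]]]] vS g0 gle.
pose be := fun u => (1 + gam) * al u - (if u == v then gam else 0).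
have av1 : al v <= 1.
  move: al1; rewrite (bigD1_seq v) //= => <-; rewrite lerDl.
  by rewrite big_seq_cond; apply: sumr_ge0 => u /andP[uS _]; apply: ltW; apply: alp.
have E : xt + gam *: (xt - v) = \sum_(u <- S) be u *: u.
  rewrite /be.
  have -> : \sum_(u <- S) ((1 + gam) * al u - (if u == v then gam else 0)) *: u
     = (1 + gam) *: \sum_(u <- S) al u *: u - \sum_(u <- S) (if u == v then gam else 0) *: u.
    rewrite scaler_sumr -sumrB; apply: eq_bigr => u _; by rewrite scalerBl scalerA.
  rewrite -xtE (bigD1_seq v) //= eqxx big1 ?addr0; last by move=> u /negbTE ->; rewrite scale0r.
  by rewrite scalerDl scale1r scalerBr addrA.
rewrite E; apply: convex_comb => //.
- by move=> u uS; apply: KA; apply: SA.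
- move=> u uS; rewrite /be; case: eqP => [->|_].
    move: gle; rewrite /away_ratio; case: eqP => [->|an].
      by move=> _; rewrite mulr1 addrK.
    rewrite lee_fin => gle; apply: aux7 => //; exact/eqP.
  rewrite subr0; apply: mulr_ge0; [lra|apply: ltW; exact: alp uS].
- rewrite /be /= sumrB -mulr_sumr al1 mulr1 (bigD1_seq v) //= eqxx big1 ?addr0.
    by rewrite addrK.
  by move=> u /negbTE ->.
Qed.

End Away.


Section Fin.
Context {R : realType}.

Lemma final_I (w1 w0 gam g K Mi C : R) : w1 <= w0 + gam * (- g + K) + gam ^+ 2 * C ->
  K <= Mi * g -> 0 <= gam -> w1 <= w0 - (1 - Mi) * gam * g + gam ^+ 2 * C.
Proof.
move=> H K0 g0.
have : gam * K <= gam * (Mi * g) by apply: ler_wpM2l.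
have -> : w0 - (1 - Mi) * gam * g = w0 - gam * g + gam * (Mi * g) by ring.
move: H; rewrite mulrDr mulrN; lra.
Qed.

Lemma final_P (w1 w0 gam gd gP K Mi C : R) : w1 <= w0 + gam * (- gd + K) + gam ^+ 2 * C ->
  K <= Mi * gP -> gP <= 2 * gd -> 0 <= gam ->
  w1 <= w0 - (1 / 2 - Mi) * gam * gP + gam ^+ 2 * C.
Proof.
move=> H K0 G0 g0.
have : gam * K <= gam * (Mi * gP) by apply: ler_wpM2l.
have : gam * gP <= gam * (2 * gd) by apply: ler_wpM2l.
have -> : w0 - (1 / 2 - Mi) * gam * gP = w0 - (gam * gP) / 2 + gam * (Mi * gP) by ring.
move: H; rewrite mulrDr mulrN; lra.
Qed.

Lemma conv_step k (K : set 'rV[R]_k) x s (g : R) : convex_setR K -> K x -> K s ->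
  0 <= g <= 1 -> K (x + g *: (s - x)).
Proof.
move=> cK Kx Ks g01.
have := cK s x g Ks Kx g01.
by rewrite scalerBl scale1r scalerBr addrCA.
Qed.

Lemma FW_sep n m (X : set 'rV[R]_n) (Y : set 'rV[R]_m) L xt yt sx sy :
  FW_atom X Y L xt yt sx sy ->
  (forall s, X s -> dotv sx (gradx L xt yt) <= dotv s (gradx L xt yt)) /\
  (forall s, Y s -> dotv sy (- grady L xt yt) <= dotv s (- grady L xt yt)).
Proof.
move=> [Xsx [Ysy H]]; split => s Hs.
  by have := H s sy Hs Ysy; rewrite lerD2r.
by have := H sx s Xsx Hs; rewrite lerD2l.
Qed.

Lemma neg_r_split n m (L : 'rV[R]_n -> 'rV[R]_m -> R) xt yt (a b : 'rV[R]_n) (c d : 'rV[R]_m) :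
  neg_r_dot L xt yt (a - b) (c - d) = dotv (b - a) (gradx L xt yt) + dotv (d - c) (- grady L xt yt).
Proof.
rewrite /neg_r_dot (dotvC (gradx L xt yt) (a - b)) (dotvC (grady L xt yt) (c - d)).
rewrite !dotvBl !dotvNr; ring.
Qed.

Lemma neg_r_dotD n m (L : 'rV[R]_n -> 'rV[R]_m -> R) xt yt (a b : 'rV[R]_n) (c d : 'rV[R]_m) :
  neg_r_dot L xt yt (a + b) (c + d) = neg_r_dot L xt yt a c + neg_r_dot L xt yt b d.
Proof. rewrite /neg_r_dot !dotvDr; ring. Qed.

Lemma mine_le_l (a b c : \bar R) : (a <= c)%E -> (Order.min a b <= c)%E.
Proof. by move=> h; rewrite ge_min h. Qed.
Lemma mine_le_r (a b c : \bar R) : (b <= c)%E -> (Order.min a b <= c)%E.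
Proof. by move=> h; rewrite ge_min h orbT. Qed.

Lemma aux8 (a b c : R) : b - c <= a -> - a <= - b - - c.
Proof. lra. Qed.

End Fin.

Unset Implicit Arguments.
Theorem lemma20 (R : realType) (n m : nat)
  (X : set 'rV[R]_n) (Y : set 'rV[R]_m) (L : 'rV[R]_n -> 'rV[R]_m -> R)
  (xs : 'rV[R]_n) (ys : 'rV[R]_m) :
  X !=set0 -> Y !=set0 -> convex_setR X -> convex_setR Y ->
  compact X -> compact Y ->
  (forall x y, X x -> Y y -> differentiable (Lpair L) (x, y)) ->
  unif_strongly_convex_concave X Y L ->
  saddle_point X Y L xs ys ->
  CL_e X Y L \is a fin_num ->
  ML_e X Y L xs ys \is a fin_num ->
  let C := fine (CL_e X Y L) in
  let M := fine (ML_e X Y L xs ys) in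
  (* (I) interior case, FW direction *)
  (relint sqnp (X `*` Y) (xs, ys) -> (0 < muint_e X Y L xs ys)%E ->
   forall xt yt sx sy (gam : R),
     X xt -> Y yt -> FW_atom X Y L xt yt sx sy -> 0 <= gam <= 1 ->
     let gFW := neg_r_dot L xt yt (sx - xt) (sy - yt) in
     wgap L xs ys (xt + gam *: (sx - xt)) (yt + gam *: (sy - yt)) <=
       wgap L xs ys xt yt - nu_const 1 M (muint_e X Y L xs ys) * gam * gFW
       + gam ^+ 2 * C)
  /\
  (* (P) polytope case, SP-AFW direction *)
  (forall (A : seq 'rV[R]_n) (B : seq 'rV[R]_m),
   X = conv_hull A -> Y = conv_hull B -> (0 < muA_e X Y L A B)%E ->
   forall xt yt (Sx : seq 'rV[R]_n) (Sy : seq 'rV[R]_m)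
          (alx : 'rV[R]_n -> R) (aly : 'rV[R]_m -> R) sx sy vx vy,
     active_set A Sx alx xt -> active_set B Sy aly yt ->
     FW_atom X Y L xt yt sx sy -> away_atom L xt yt Sx Sy vx vy ->
     let gFW := neg_r_dot L xt yt (sx - xt) (sy - yt) in
     let gA := neg_r_dot L xt yt (xt - vx) (yt - vy) in
     let gPFW := neg_r_dot L xt yt (sx - xt + (xt - vx)) (sy - yt + (yt - vy)) in
     let FWstep := (gA <= gFW) in
     let dx := if FWstep then sx - xt else xt - vx in
     let dy := if FWstep then sy - yt else yt - vy in
     let gmax := if FWstep then 1%E
                 else mine (away_ratio (alx vx)) (away_ratio (aly vy)) in
     forall gam : R, 0 <= gam -> (gam%:E <= gmax)%E ->
     wgap L xs ys (xt + gam *: dx) (yt + gam *: dy) <=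
       wgap L xs ys xt yt - nu_const (1/2) M (muA_e X Y L A B) * gam * gPFW
       + gam ^+ 2 * C).
Proof.
move=> X0 Y0 cvX cvY cX cY dL hsc hsp hCL hML C M.
have [Xxs [Yys Hs]] := hsp.
have [M0 _] := ML_facts Xxs Yys hML.
have [muX [muY [mX0 [mY0 [HX HY]]]]] := hsc.
split.
- move=> _ mu0 xt yt sx sy gam Xxt Yyt FW /andP[g0 g1]; cbv zeta.
  have [FWx FWy] := FW_sep FW.
  have [Xsx [Ysy _]] := FW.
  have g01 : 0 <= gam <= 1 by rewrite g0 g1.
  have Xn := conv_step cvX Xxt Xsx g01.
  have Yn := conv_step cvY Yyt Ysy g01.
  have D := descent cvX cvY hsc hsp hCL hML Xxt Yyt Xsx Xxt Ysy Yyt g0 Xn Yn.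
  rewrite -/C -/M in D.
  apply: (final_I D) => //.
  rewrite neg_r_split.
  apply: (nu_comb (ax := L xt yt - L xs yt) (ay := - L xt yt - - L xt ys)) => //.
  - by rewrite dotvBl subr_ge0; apply: FWx.
  - by rewrite dotvBl subr_ge0; apply: FWy.
  - by rewrite subr_ge0; have /andP[] := Hs xt ys Xxt Yys.
  - by rewrite subr_ge0; have /andP[] := Hs xs yt Xxs Yyt.
  - by rewrite opprK; ring.
  - move=> ax0; apply: (int_generic (K := X) (f := fun x => L x yt) (gf := fun x => gradx L x yt)) => //.
    move=> r Hr; rewrite /muint_e.
    apply: mine_le_l; apply: ereal_inf_lbound.
    by exists r => //; exists yt.
  - move=> ay0; apply: (int_generic (K := Y) (f := fun y => - L xt y) (gf := fun y => - grady L xt y)) => //.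
    move=> r Hr; rewrite /muint_e.
    apply: mine_le_r; apply: ereal_inf_lbound.
    by exists r => //; exists xt.
- move=> A B eX eY mu0 xt yt Sx Sy alx aly sx sy vx vy actx acty FW AW; cbv zeta.
  move=> gam g0 ggm.
  have XA : forall u, u \in A -> X u by move=> u uA; rewrite eX; apply: conv_hull_mem.
  have YB : forall u, u \in B -> Y u by move=> u uB; rewrite eY; apply: conv_hull_mem.
  have Xxt : X xt.
    case: (actx) => [_ [SA [alp [al1 ->]]]]; apply: convex_comb => //.
    - by move=> u uS; apply: XA; apply: SA.
    - by move=> u uS; apply: ltW; apply: alp.
  have Yyt : Y yt.
    case: (acty) => [_ [SB [alp [al1 ->]]]]; apply: convex_comb => //.
    - by move=> u uS; apply: YB; apply: SB.
    - by move=> u uS; apply: ltW; apply: alp.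
  have [FWx FWy] := FW_sep FW.
  have [Xsx [Ysy _]] := FW.
  have [vxS [vyS AWH]] := AW.
  have AWx : forall u, u \in Sx -> dotv u (gradx L xt yt) <= dotv vx (gradx L xt yt).
    by move=> u uS; have := AWH u vy uS vyS; rewrite lerD2r.
  have AWy : forall u, u \in Sy -> dotv u (- grady L xt yt) <= dotv vy (- grady L xt yt).
    by move=> u uS; have := AWH vx u vxS uS; rewrite lerD2l.
  have Xvx : X vx by apply: XA; case: actx => [_ [SA _]]; apply: SA.
  have Yvy : Y vy by apply: YB; case: acty => [_ [SB _]]; apply: SB.
  have hXt : conv_hull A xt by rewrite -eX.
  have hXs : conv_hull A xs by rewrite -eX.
  have hYt : conv_hull B yt by rewrite -eY.
  have hYs : conv_hull B ys by rewrite -eY.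
  have hbx : forall r, muA_vals (conv_hull A) A (fun x => L x yt) (fun x => gradx L x yt) r ->
      (muA_e X Y L A B <= r%:E)%E.
    move=> r Hr; rewrite /muA_e; apply: mine_le_l; apply: ereal_inf_lbound.
    by exists r => //; exists yt => //; rewrite eX.
  have hby : forall r, muA_vals (conv_hull B) B (fun y => - L xt y) (fun y => - grady L xt y) r ->
      (muA_e X Y L A B <= r%:E)%E.
    move=> r Hr; rewrite /muA_e; apply: mine_le_r; apply: ereal_inf_lbound.
    by exists r => //; exists xt => //; rewrite eY.
  have hFWx : forall s, conv_hull A s -> dotv sx (gradx L xt yt) <= dotv s (gradx L xt yt).
    by rewrite -eX.
  have hFWy : forall s, conv_hull B s -> dotv sy (- grady L xt yt) <= dotv s (- grady L xt yt).
    by rewrite -eY.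
  have hgx : dotv (xs - xt) (gradx L xt yt) <= L xs yt - L xt yt.
    exact: (grad_x Xxt Xxs (dL _ _ Xxt Yyt) (ltW mX0) (HX yt Yyt)).
  have hgy : dotv (ys - yt) (- grady L xt yt) <= - L xt ys - - L xt yt.
    have := grad_y Yyt Yys (dL _ _ Xxt Yyt) (ltW mY0) (HY xt Xxt).
    by rewrite dotvNr; apply: aux8.
  have [gx0 Hx] := A_generic hXt hXs mu0 hbx hFWx actx vxS AWx hgx.
  have [gy0 Hy] := A_generic hYt hYs mu0 hby hFWy acty vyS AWy hgy.
  set gFW := neg_r_dot L xt yt (sx - xt) (sy - yt) in ggm *.
  set gA := neg_r_dot L xt yt (xt - vx) (yt - vy) in ggm *.
  have gPE : neg_r_dot L xt yt (sx - xt + (xt - vx)) (sy - yt + (yt - vy)) = gFW + gA.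
    by rewrite neg_r_dotD.
  have Kb : M * (Num.sqrt (L xt ys - L xs ys) + Num.sqrt (L xs ys - L xs yt)) <=
      M * inv_sqrt_e (muA_e X Y L A B) * neg_r_dot L xt yt (sx - xt + (xt - vx)) (sy - yt + (yt - vy)).
    rewrite addrA subrK addrA subrK neg_r_split.
    apply: (nu_comb (ax := L xt yt - L xs yt) (ay := - L xt yt - - L xt ys)) => //.
    - by rewrite subr_ge0; have /andP[] := Hs xt ys Xxt Yys.
    - by rewrite subr_ge0; have /andP[] := Hs xs yt Xxs Yyt.
    - by rewrite opprK; ring.
  rewrite gPE in Kb *.
  rewrite /nu_const.
  case hF : (gA <= gFW) in ggm *.
  - move: ggm; rewrite lee_fin => g1.
    have g01 : 0 <= gam <= 1 by rewrite g0 g1.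
    have Xn := conv_step cvX Xxt Xsx g01.
    have Yn := conv_step cvY Yyt Ysy g01.
    have D := descent cvX cvY hsc hsp hCL hML Xxt Yyt Xsx Xxt Ysy Yyt g0 Xn Yn.
    rewrite -/C -/M -/gFW in D.
    apply: (final_P D) => //.
    by move: hF; rewrite /gFW /gA; lra.
  - move: ggm; rewrite le_min => /andP[g1 g2].
    have Xn := away_feas cvX XA actx vxS g0 g1.
    have Yn := away_feas cvY YB acty vyS g0 g2.
    have D := descent cvX cvY hsc hsp hCL hML Xxt Yyt Xxt Xvx Yyt Yvy g0 Xn Yn.
    rewrite -/C -/M -/gA in D.
    apply: (final_P D) => //.
    by move: hF; rewrite /gFW /gA; lra.
Qed.
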